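(* Let $n\ge1$, $A=\begin{bmatrix}1&2\\0&1\end{bmatrix}$, $B=\begin{bmatrix}1&0\\2&1\end{bmatrix}$, $\Gamma(2)$ the principal congruence subgroup of level $2$ (generated in $\mathrm{PSL}_2(\mathbb{Z})$ by $A,B$), and $\Phi(n)=\langle A^n,B^n,\Gamma(2)'\rangle$ where $\Gamma(2)'$ is the commutator subgroup of $\Gamma(2)$. Let $\pi:\bar{\mathfrak{H}}\to\bar{\mathfrak{H}}/\Phi(n)=X_{\Phi(n)}$ be the quotient map, where $\bar{\mathfrak{H}}=\mathfrak{H}\cup\mathbb{P}^1(\mathbb{Q})$ with $\mathrm{SL}_2(\mathbb{Z})$ acting by fractional linear transformations. Then: (1) the actions of $A$ and $B$ on $X_{\Phi(n)}$ commute; (2) $\pi(A^k\cdot 1)=\pi(B^k\cdot 1)$ for every $k\in\mathbb{Z}$.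
   Context: Since $\Phi(n)$ contains the commutator subgroup of $\Gamma(2)$, it is normal in $\Gamma(2)$, so $\Gamma(2)$ acts on $X_{\Phi(n)}$ via $\pi(z)\mapsto\pi(g z)$. Here $1\in\mathbb{P}^1(\mathbb{Q})\subset\bar{\mathfrak{H}}$. *)

(* Defs.v *)
From mathcomp Require Import all_boot all_algebra.
From mathcomp Require Import reals complex.
Set Implicit Arguments.
Unset Strict Implicit.
Unset Printing Implicit Defensive.
Import GRing.Theory Num.Theory.
Local Open Scope ring_scope.

Notation mat2 := 'M[int]_2.

Definition matA : mat2 := \matrix_(i < 2, j < 2)
  (if (i == 0) && (j == 1) then 2%:Z else if i == j then 1 else 0).
Definition matB : mat2 := \matrix_(i < 2, j < 2)
  (if (i == 1) && (j == 0) then 2%:Z else if i == j then 1 else 0).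

Inductive gen (S : mat2 -> Prop) : mat2 -> Prop :=
| gen_in g : S g -> gen S g
| gen_1 : gen S 1
| gen_M g h : gen S g -> gen S h -> gen S (g * h)
| gen_V g : gen S g -> gen S g^-1.

(* Gamma(2) = <A, B> (its image in PSL_2(Z) is the principal congruence
   subgroup of level 2). *)
Definition Gamma2 : mat2 -> Prop := gen (fun g => g = matA \/ g = matB).

Definition Gamma2' : mat2 -> Prop :=
  gen (fun g => exists x y, Gamma2 x /\ Gamma2 y /\ g = x^-1 * y^-1 * x * y).

Definition Phi (n : nat) : mat2 -> Prop :=
  gen (fun g => g = matA ^+ n \/ g = matB ^+ n \/ Gamma2' g).

(* Points of the extended upper half plane Hbar = H u P^1(Q):
   Hinf = the cusp infinity, Hcusp q = the rational cusp q, Hup z = z in C. *)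
Inductive hpt (R : realType) :=
| Hinf
| Hcusp of rat
| Hup of R[i].
Arguments Hinf {R}.
Arguments Hcusp {R} _.
Arguments Hup {R} _.

Definition inHbar (R : realType) (p : hpt R) : Prop :=
  match p with
  | Hup z => 0 < complex.Im z
  | _ => True
  end.

Definition act (R : realType) (g : mat2) (p : hpt R) : hpt R :=
  let a := g 0 0 in let b := g 0 1 in let c := g 1 0 in let d := g 1 1 in
  match p with
  | Hinf => if c == 0 then Hinf else Hcusp ((a%:~R : rat) / c%:~R)
  | Hcusp q =>
      if c%:~R * q + d%:~R == 0 then Hinf
      else Hcusp ((a%:~R * q + b%:~R) / (c%:~R * q + d%:~R))
  | Hup z => Hup ((a%:~R * z + b%:~R) / (c%:~R * z + d%:~R))
  end.

(* pi(p) = pi(q) in X_{Phi(n)} = Hbar / Phi(n). *)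
Definition piEq (R : realType) (n : nat) (p q : hpt R) : Prop :=
  exists g, Phi n g /\ act g p = q.

(* Main.v *)
Require Import Defs.
From mathcomp Require Import all_boot all_algebra.
From mathcomp Require Import reals complex ring lra.
Set Implicit Arguments.
Unset Strict Implicit.
Import GRing.Theory Num.Theory.
Local Open Scope ring_scope.

Definition mk (a b c d : int) : mat2 := \matrix_(i < 2, j < 2)
  (if i == 0 then (if j == 0 then a else b) else (if j == 0 then c else d)).

Lemma mk_eq (g : mat2) : g = mk (g 0 0) (g 0 1) (g 1 0) (g 1 1).
Proof.
apply/matrixP => i j; rewrite !mxE.
by case: i => [[|[|//]] Hi]; case: j => [[|[|//]] Hj]; congr (g _ _); apply: val_inj.
Qed.

Lemma mkE00 a b c d : mk a b c d 0 0 = a. Proof. by rewrite mxE. Qed.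
Lemma mkE01 a b c d : mk a b c d 0 1 = b. Proof. by rewrite mxE. Qed.
Lemma mkE10 a b c d : mk a b c d 1 0 = c. Proof. by rewrite mxE. Qed.
Lemma mkE11 a b c d : mk a b c d 1 1 = d. Proof. by rewrite mxE. Qed.
Definition mkE := (mkE00, mkE01, mkE10, mkE11).

Lemma mk_mul a b c d a' b' c' d' :
  mk a b c d * mk a' b' c' d' =
  mk (a * a' + b * c') (a * b' + b * d') (c * a' + d * c') (c * b' + d * d').
Proof.
rewrite [LHS]mk_eq -mulmxE.
by rewrite !mxE !big_ord_recl !big_ord0 /mk !mxE /= !addr0.
Qed.

Lemma mk1 : (1 : mat2) = mk 1 0 0 1.
Proof. by rewrite [LHS]mk_eq !mxE. Qed.

Lemma matAE : matA = mk 1 2 0 1.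
Proof. by rewrite [LHS]mk_eq !mxE. Qed.
Lemma matBE : matB = mk 1 0 2 1.
Proof. by rewrite [LHS]mk_eq !mxE. Qed.

Lemma inv_eq (x y : mat2) : x * y = 1 -> y * x = 1 -> x^-1 = y.
Proof.
move=> H1 H2; have u : x \is a GRing.unit by apply/unitrP; exists y.
by rewrite -[y]mul1r -(mulVr u) -mulrA H1 mulr1.
Qed.

Lemma mk_inv a b c d : a * d - b * c = 1 -> (mk a b c d)^-1 = mk d (- b) (- c) a.
Proof.
move=> h; apply: inv_eq; rewrite mk_mul mk1; congr mk; lra.
Qed.

Definition Am (k : int) := mk 1 (2 * k) 0 1.
Definition Bm (k : int) := mk 1 0 (2 * k) 1.

Lemma Am_inv k : (Am k)^-1 = Am (- k).
Proof. rewrite /Am mk_inv; [congr mk; ring | ring]. Qed.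
Lemma Bm_inv k : (Bm k)^-1 = Bm (- k).
Proof. rewrite /Bm mk_inv; [congr mk; ring | ring]. Qed.

Lemma matA_exp (k : int) : matA ^ k = Am k.
Proof.
have hp : forall m : nat, matA ^+ m = Am m.
  elim=> [|m IH]; first by rewrite expr0 mk1 /Am; congr mk.
  rewrite exprSr IH matAE /Am mk_mul; congr mk; rewrite ?PoszD; ring.
case: k => m; first exact: hp.
change ((matA ^+ m.+1)^-1 = Am (Negz m)).
by rewrite hp Am_inv NegzE.
Qed.

Lemma matB_exp (k : int) : matB ^ k = Bm k.
Proof.
have hp : forall m : nat, matB ^+ m = Bm m.
  elim=> [|m IH]; first by rewrite expr0 mk1 /Bm; congr mk.
  rewrite exprSr IH matBE /Bm mk_mul; congr mk; rewrite ?PoszD; ring.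
case: k => m; first exact: hp.
change ((matB ^+ m.+1)^-1 = Bm (Negz m)).
by rewrite hp Bm_inv NegzE.
Qed.

Lemma gen_unit (S : mat2 -> Prop) : (forall g, S g -> g \is a GRing.unit) ->
  forall g, gen S g -> g \is a GRing.unit.
Proof.
move=> hS g; elim=> //; first exact: unitr1.
- by move=> x y _ hx _ hy; rewrite unitrMl.
- by move=> x _ hx; rewrite unitrV.
Qed.

Lemma mk_unit a b c d : a * d - b * c = 1 -> mk a b c d \is a GRing.unit.
Proof.
move=> h; apply/unitrP; exists (mk d (- b) (- c) a).
rewrite !mk_mul mk1; split; congr mk; lra.
Qed.

Lemma Gamma2_unit g : Gamma2 g -> g \is a GRing.unit.
Proof.
apply: gen_unit => x [->|->]; [rewrite matAE | rewrite matBE]; apply: mk_unit; ring.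
Qed.

Lemma Gamma2_Am k : Gamma2 (Am k).
Proof.
have hp : forall m : nat, Gamma2 (Am m).
  elim=> [|m IH].
    have -> : Am 0 = 1 by rewrite mk1 /Am; congr mk.
    exact: gen_1.
  have -> : Am m.+1 = Am m * matA.
    by rewrite matAE /Am mk_mul; congr mk; rewrite ?PoszD; ring.
  by apply: gen_M => //; apply: gen_in; left.
case: k => m; first exact: hp.
rewrite NegzE -Am_inv; apply: gen_V; exact: hp.
Qed.

Lemma Gamma2_Bm k : Gamma2 (Bm k).
Proof.
have hp : forall m : nat, Gamma2 (Bm m).
  elim=> [|m IH].
    have -> : Bm 0 = 1 by rewrite mk1 /Bm; congr mk.
    exact: gen_1.
  have -> : Bm m.+1 = Bm m * matB.
    by rewrite matBE /Bm mk_mul; congr mk; rewrite ?PoszD; ring.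
  by apply: gen_M => //; apply: gen_in; right.
case: k => m; first exact: hp.
rewrite NegzE -Bm_inv; apply: gen_V; exact: hp.
Qed.

Lemma comm_G2' x y : Gamma2 x -> Gamma2 y -> Gamma2' (x^-1 * y^-1 * x * y).
Proof. by move=> hx hy; apply: gen_in; exists x, y. Qed.

Lemma G2'_G2 h : Gamma2' h -> Gamma2 h.
Proof.
elim=> //.
- move=> g [x [y [hx [hy ->]]]].
  by do 3! apply: gen_M => //; apply: gen_V.
- exact: gen_1.
- by move=> g1 g2 _ h1 _ h2; apply: gen_M.
- by move=> g1 _ h1; apply: gen_V.
Qed.

Lemma normal_G2' h z : Gamma2' h -> Gamma2 z -> Gamma2' (z^-1 * h * z).
Proof.
move=> hh hz.
have uh := Gamma2_unit (G2'_G2 hh).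
have -> : z^-1 * h * z = h * (h^-1 * z^-1 * h * z) by rewrite !mulrA (mulrV uh) mul1r.
apply: gen_M => //; apply: comm_G2' => //; exact: G2'_G2.
Qed.

Definition Mk (s k : int) := mk (s * (1 + 2 * k)) (s * (- 4 * k * k - 4 * k))
  (s * (4 * k * k + 4 * k)) (s * (1 - 2 * k - 12 * k * k - 8 * k * k * k)).

Lemma Mk_step k : (exists s, s * s = 1 /\ Gamma2' (Mk s k)) ->
  (exists s, s * s = 1 /\ Gamma2' (Mk s (k + 1))) /\
  (exists s, s * s = 1 /\ Gamma2' (Mk s (k - 1))).
Proof.
case=> s [hs hg]; split; exists (- s); (split; first by rewrite mulrNN).
- have -> : Mk (- s) (k + 1) = (Bm (-1))^-1 * Mk s k * Bm (-1) *
      ((Bm (-1))^-1 * (Am (- (k + 1)))^-1 * Bm (-1) * Am (- (k + 1))).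
    rewrite !Bm_inv !Am_inv /Bm /Am /Mk !mk_mul; congr mk; ring.
  apply: gen_M; first exact: normal_G2' hg (Gamma2_Bm _).
  exact: comm_G2' (Gamma2_Bm _) (Gamma2_Am _).
- have -> : Mk (- s) (k - 1) = (Bm 1)^-1 *
      (Mk s k * ((Am (- k))^-1 * (Bm (-1))^-1 * Am (- k) * Bm (-1))) * Bm 1.
    rewrite !Bm_inv !Am_inv /Bm /Am /Mk !mk_mul; congr mk; ring.
  apply: normal_G2' (Gamma2_Bm _).
  apply: gen_M => //.
  exact: comm_G2' (Gamma2_Am _) (Gamma2_Bm _).
Qed.

Lemma Mk_all k : exists s, s * s = 1 /\ Gamma2' (Mk s k).
Proof.
have h : forall m : nat, (exists s, s * s = 1 /\ Gamma2' (Mk s m)) /\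
                        (exists s, s * s = 1 /\ Gamma2' (Mk s (- m%:Z))).
  elim=> [|m [IH1 IH2]].
    have h0 : exists s, s * s = 1 /\ Gamma2' (Mk s 0).
      exists 1; split => //.
      have -> : Mk 1 0 = 1 by rewrite mk1 /Mk; congr mk; ring.
      exact: gen_1.
    by split.
  split.
    by rewrite -addn1 PoszD; case: (Mk_step IH1).
  by rewrite -addn1 PoszD opprD; case: (Mk_step IH2).
case: k => m; first by case: (h m).
by rewrite NegzE; case: (h m.+1).
Qed.

From mathcomp Require Import zify.

Lemma act_cusp (R : realType) a b c d (x : int) :
  act (mk a b c d) (Hcusp (x%:~R) : hpt R) =
  if c * x + d == 0 then Hinf else Hcusp ((a * x + b)%:~R / (c * x + d)%:~R).
Proof. by rewrite /act !mkE -!intrM -!intrD intr_eq0. Qed.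

Lemma part2 (R : realType) (n : nat) (k : int) :
     piEq n (act (matA ^ k) (Hcusp 1)) (act (matB ^ k) (Hcusp 1 : hpt R)).
Proof.
have e : (Hcusp 1 : hpt R) = Hcusp ((1:int)%:~R) by [].
rewrite e matA_exp matB_exp /Am /Bm !act_cusp.
have -> : (0 * 1 + 1 == 0 :> int) = false by [].
have -> : (2 * k * 1 + 1 == 0) = false by apply/negbTE; lia.
have -> : ((0 * 1 + 1 : int)%:~R : rat) = 1 by [].
rewrite divr1.
case: (Mk_all k) => s [hs hg].
exists (Mk s k); split; first by apply: gen_in; right; right.
have hs0 : s != 0 by apply/eqP => s0; move: hs; rewrite s0 mul0r.
rewrite /Mk act_cusp.
have -> : s * (4 * k * k + 4 * k) * (1 * 1 + 2 * k) + s * (1 - 2 * k - 12 * k * k - 8 * k * k * k)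
   = s * (2 * k * 1 + 1) by ring.
have h2 : (2 * k * 1 + 1) != 0 by lia.
rewrite mulf_eq0 (negbTE hs0) (negbTE h2) /=.
have -> : s * (1 + 2 * k) * (1 * 1 + 2 * k) + s * (-4 * k * k - 4 * k) = s by ring.
rewrite intrM.
congr Hcusp.
have hs' : (s%:~R : rat) != 0 by rewrite intr_eq0.
have h2' : ((2 * k * 1 + 1)%:~R : rat) != 0 by rewrite intr_eq0.
rewrite invfM mulrA mulfV // mul1r div1r.
Qed.

Definition g1 := mk (-3) 8 (-8) 21.
Lemma g1_Phi n : Phi n g1.
Proof.
apply: gen_in; right; right.
have -> : g1 = (Bm (-1))^-1 * (Am (-1))^-1 * Bm (-1) * Am (-1).
  by rewrite !Bm_inv !Am_inv /Bm /Am /g1 !mk_mul; congr mk; ring.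
exact: comm_G2' (Gamma2_Bm _) (Gamma2_Am _).
Qed.

Lemma p1_cusp (R : realType) (q : rat) :
  act g1 (act matA (act matB (Hcusp q : hpt R))) = act matB (act matA (Hcusp q)).
Proof.
rewrite matAE matBE /g1 /act !mkE.
have c0 : ((0:int)%:~R : rat) = 0 by [].
have c1 : ((1:int)%:~R : rat) = 1 by [].
have c2 : ((2:int)%:~R : rat) = 2 by [].
have c8 : ((8:int)%:~R : rat) = 8 by [].
have c21 : ((21:int)%:~R : rat) = 21 by [].
have cm3 : (((-3):int)%:~R : rat) = -3 by [].
have cm8 : (((-8):int)%:~R : rat) = -8 by [].
rewrite c0 c1 c2 c8 c21 cm3 cm8 !mul0r !add0r !mul1r !addr0 oner_eq0 divr1 /=.
case: ifP => h1 /=.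
  have hq : q = -1/2.
    by move/eqP: h1 => h1; lra.
  by rewrite hq.
rewrite !mul0r !add0r oner_eq0 divr1 /= !mul1r !addr0.
have hd : 2 * q + 1 != 0 by rewrite h1.
have hw : q = (q / (2 * q + 1)) * (2 * q + 1) by rewrite divfK.
move: hw; set w := q / (2 * q + 1) => hw.
case: ifP => h2; case: ifP => h3 //.
- have w5 : w = 5 / 8 by move/eqP: h2; lra.
  rewrite w5 in hw; exfalso; move/negbT/eqP: h3; apply; lra.
- have q5 : q = -5 / 2 by move/eqP: h3; lra.
  rewrite q5 in hw; exfalso; move/negbT/eqP: h2; apply; lra.
- congr Hcusp.
  move/negbT: h2 => h2; move/negbT: h3 => h3.
  apply/eqP; rewrite eqr_div //; apply/eqP.
  nra.
Qed.


Lemma p1_inf (R : realType) :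
  act g1 (act matA (act matB (Hinf : hpt R))) = act matB (act matA Hinf).
Proof. by rewrite matAE matBE /g1 /act !mkE. Qed.

Lemma nzc (R : realType) (a b : R) (z : R[i]) : 0 < complex.Im z -> a != 0 ->
  ((a%:C)%C * z + (b%:C)%C != 0).
Proof.
move=> hz ha; apply/eqP => h.
have := congr1 (@complex.Im R) h.
case: z hz {h} => x y /= hz.
rewrite mul0r !addr0 => /eqP; rewrite mulf_eq0 (negbTE ha) /= => /eqP y0.
by move: hz; rewrite y0; lra.
Qed.

Lemma p1_up (R : realType) (z : R[i]) : 0 < complex.Im z ->
  act g1 (act matA (act matB (Hup z))) = act matB (act matA (Hup z)).
Proof.
move=> hz.
rewrite matAE matBE /g1 /act !mkE /=.
have c0 : ((0:int)%:~R : R[i]) = 0 by [].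
have c1 : ((1:int)%:~R : R[i]) = 1 by [].
have c2 : ((2:int)%:~R : R[i]) = 2 by [].
have c8 : ((8:int)%:~R : R[i]) = 8 by [].
have c21 : ((21:int)%:~R : R[i]) = 21 by [].
have cm3 : (((-3):int)%:~R : R[i]) = -3 by [].
have cm8 : (((-8):int)%:~R : R[i]) = -8 by [].
rewrite c0 c1 c2 c8 c21 cm3 cm8 !mul0r !add0r !mul1r !addr0 divr1.
congr Hup.
have n1 : 2 * z + 1 != 0.
  have := nzc 1 hz (a := 2); rewrite rmorph_nat rmorph1; apply.
  by rewrite pnatr_eq0.
have n5 : 2 * z + 5 != 0.
  have := nzc 5 hz (a := 2); rewrite !rmorph_nat; apply.
  by rewrite pnatr_eq0.
rewrite !divr1.
have hw : z = (z / (2 * z + 1)) * (2 * z + 1) by rewrite divfK.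
move: hw; set w := z / (2 * z + 1) => hw.
have nb : -8 * (w + 2) + 21 != 0.
  apply: contraNneq n5 => h.
  have -> : 2 * z + 5 = (2 * z + 1) * (-8 * (w + 2) + 21) + 8 * (w * (2 * z + 1) - z) by ring.
  by rewrite h -hw subrr mulr0 mulr0 addr0.
have n5' : 2 * (z + 2) + 1 != 0 by have -> : 2 * (z + 2) + 1 = 2 * z + 5 by ring.
apply/eqP; rewrite eqr_div //; apply/eqP; apply: subr0_eq.
have -> : (-3 * (w + 2) + 8) * (2 * (z + 2) + 1) - (z + 2) * (-8 * (w + 2) + 21)
  = w * (2 * z + 1) - z by ring.
by rewrite -hw subrr.
Qed.

Theorem lemma3p1 (R : realType) (n : nat) (hn : (1 <= n)%N) :
  (forall p : hpt R, inHbar p ->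
     piEq n (act matA (act matB p)) (act matB (act matA p))) /\
  (forall k : int,
     piEq n (act (matA ^ k) (Hcusp 1)) (act (matB ^ k) (Hcusp 1 : hpt R))).
Proof.
split; last exact: part2.
move=> p hp; exists g1; split; first exact: g1_Phi.
case: p hp => [_|q _|z hz]; [exact: p1_inf | exact: p1_cusp | exact: p1_up].
Qed.
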